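(* Let $p$ be a prime and $n$ a positive integer. Let $H_n(\mathbf{Q}_p)=\mathbf{Q}_p^n\times\mathbf{Q}_p^n\times\mathbf{Q}_p$ with the group operation $$(x,y,t)\diamond(x',y',t')=\Big(x+x',\,y+y',\,t+t'+\sum_{j=1}^n x_j y_j'\Big),$$ and for $r\in\mathbf{Q}_p$ let $\delta_r((x,y,t))=(rx,ry,r^2t)$. Define $$N((x,y,t))=\max(|x_1|_p,\ldots,|x_n|_p,|y_1|_p,\ldots,|y_n|_p,|t|_p^{1/2}).$$ Then for all $(x,y,t),(x',y',t')\in H_n(\mathbf{Q}_p)$ and $r\in\mathbf{Q}_p$: (i) $N((x,y,t)\diamond(x',y',t'))\le\max(N((x,y,t)),N((x',y',t')))$; (ii) $N((x,y,t)^{-1})=N((x,y,t))$, where $(x,y,t)^{-1}$ is the inverse in $H_n(\mathbf{Q}_p)$; (iii) $N(\delta_r((x,y,t)))=|r|_p\,N((x,y,t))$. Consequently $N((x',y',t')^{-1}\diamond(x,y,t))$ is a left-invariant ultrametric and $N((x,y,t)\diamond(x',y',t')^{-1})$ is a right-invariant ultrametric on $H_n(\mathbf{Q}_p)$, each determining the product topology coming from the standard topology on $\mathbf{Q}_p$.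
   Context: $|\cdot|_p$ denotes the $p$-adic absolute value on the field $\mathbf{Q}_p$ of $p$-adic numbers. The inverse in this group is $(x,y,t)^{-1}=(-x,-y,-t+\sum_j x_jy_j)$. A metric $d$ is an ultrametric if $d(x,z)\le\max(d(x,y),d(y,z))$; it is left-invariant if $d(ax,ay)=d(x,y)$ for all $a,x,y$, and right-invariant if $d(xb,yb)=d(x,y)$. *)

(* Defs.v *)
From HB Require Import structures.
From mathcomp Require Import all_boot all_order all_algebra.
From mathcomp Require Import reals.
Set Implicit Arguments. Unset Strict Implicit. Unset Printing Implicit Defensive.
Import Order.TTheory GRing.Theory Num.Theory.
Local Open Scope ring_scope.

(* The p-adic absolute value on rationals: |q|_p = p^(-v_p(q)), |0|_p = 0. *)
Definition padic_abs_rat (R : realType) (p : nat) (q : rat) : R :=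
  if q == 0 then 0
  else (p%:R ^+ logn p (absz (denq q))) / (p%:R ^+ logn p (absz (numq q))).

(* Q_p is (up to isometric isomorphism) the field K with an absolute value
   abs : K -> R which is an ultrametric absolute value extending |.|_p on Q
   (via the canonical embedding ratr), in which Q is dense, and which is
   complete.  This is the completion of (Q, |.|_p). *)
Definition is_Qp (R : realType) (p : nat) (K : fieldType) (abs : K -> R) : Prop :=
  (forall x : K, 0 <= abs x) /\
  (forall x : K, abs x = 0 <-> x = 0) /\
  (forall x y : K, abs (x * y) = abs x * abs y) /\
  (forall x y : K, abs (x + y) <= Num.max (abs x) (abs y)) /\
  (forall q : rat, abs (ratr q) = padic_abs_rat R p q) /\
  (forall (x : K) (e : R), 0 < e -> exists q : rat, abs (x - ratr q) < e) /\
  (forall u : nat -> K,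
         (forall e : R, 0 < e -> exists N : nat, forall m k : nat,
              (N <= m)%N -> (N <= k)%N -> abs (u m - u k) < e) ->
         exists l : K, forall e : R, 0 < e -> exists N : nat, forall m : nat,
              (N <= m)%N -> abs (u m - l) < e).

Definition heis (K : fieldType) (n : nat) := ('rV[K]_n * 'rV[K]_n * K)%type.

Definition hmul (K : fieldType) (n : nat) (g h : heis K n) : heis K n :=
  let: (x, y, t) := g in let: (x', y', t') := h in
  (x + x', y + y', t + t' + \sum_(j < n) x 0 j * y' 0 j).

Definition hinv (K : fieldType) (n : nat) (g : heis K n) : heis K n :=
  let: (x, y, t) := g in (- x, - y, - t + \sum_(j < n) x 0 j * y 0 j).

Definition hdil (K : fieldType) (n : nat) (r : K) (g : heis K n) : heis K n :=
  let: (x, y, t) := g in (r *: x, r *: y, r ^+ 2 * t).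

Definition hnorm (R : realType) (K : fieldType) (abs : K -> R) (n : nat)
    (g : heis K n) : R :=
  let: (x, y, t) := g in
  Num.max (\big[Num.max/0]_(j < n) Num.max (abs (x 0 j)) (abs (y 0 j)))
          (Num.sqrt (abs t)).

Definition is_ultrametric (R : realType) (T : Type) (d : T -> T -> R) : Prop :=
  [/\ (forall x y, 0 <= d x y),
      (forall x y, d x y = 0 <-> x = y),
      (forall x y, d x y = d y x),
      (forall x y z, d x z <= d x y + d y z)
    & (forall x y z, d x z <= Num.max (d x y) (d y z))].

Definition left_invariant (K : fieldType) (n : nat) (R : realType)
    (d : heis K n -> heis K n -> R) : Prop :=
  forall a g h, d (hmul a g) (hmul a h) = d g h.

Definition right_invariant (K : fieldType) (n : nat) (R : realType)
    (d : heis K n -> heis K n -> R) : Prop :=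
  forall b g h, d (hmul g b) (hmul h b) = d g h.

Definition metric_open (R : realType) (T : Type) (d : T -> T -> R)
    (U : T -> Prop) : Prop :=
  forall g, U g -> exists e : R, 0 < e /\ forall h, d g h < e -> U h.

Definition abs_open (R : realType) (K : fieldType) (abs : K -> R)
    (V : K -> Prop) : Prop :=
  forall x, V x -> exists e : R, 0 < e /\ forall y, abs (y - x) < e -> V y.

Definition product_open (R : realType) (K : fieldType) (abs : K -> R) (n : nat)
    (U : heis K n -> Prop) : Prop :=
  forall g : heis K n, U g ->
    exists (Vx Vy : 'I_n -> K -> Prop) (Vt : K -> Prop),
      [/\ (forall j, abs_open abs (Vx j)), (forall j, abs_open abs (Vy j)),
          abs_open abs Vt,
          (forall j, Vx j (g.1.1 0 j) /\ Vy j (g.1.2 0 j)) /\ Vt g.2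
        & forall h : heis K n,
            (forall j, Vx j (h.1.1 0 j) /\ Vy j (h.1.2 0 j)) -> Vt h.2 -> U h].

Definition induces_product_topology (R : realType) (K : fieldType) (abs : K -> R)
    (n : nat) (d : heis K n -> heis K n -> R) : Prop :=
  forall U : heis K n -> Prop, metric_open d U <-> product_open abs U.

(* Main.v *)
Require Import Defs.
From HB Require Import structures.
From mathcomp Require Import all_boot all_order all_algebra.
From mathcomp Require Import reals ring lra.
Import Order.TTheory GRing.Theory Num.Theory.
Local Open Scope ring_scope.

Section Group.
Variables (K : fieldType) (n : nat).
Implicit Types g h k : heis K n.

Definition hone : heis K n := (0, 0, 0).

Lemma hmulA g h k : hmul g (hmul h k) = hmul (hmul g h) k.
Proof.
case: g => [[x y] t]; case: h => [[x' y'] t']; case: k => [[x'' y''] t''] /=.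
congr (_, _, _); [exact: addrA | exact: addrA |].
have E1 : \sum_(j < n) x 0 j * (y' + y'') 0 j
   = \sum_(j < n) x 0 j * y' 0 j + \sum_(j < n) x 0 j * y'' 0 j.
  by rewrite -big_split; apply: eq_bigr => j _; rewrite mxE mulrDr.
have E2 : \sum_(j < n) (x + x') 0 j * y'' 0 j
   = \sum_(j < n) x 0 j * y'' 0 j + \sum_(j < n) x' 0 j * y'' 0 j.
  by rewrite -big_split; apply: eq_bigr => j _; rewrite mxE mulrDl.
rewrite E1 E2; ring.
Qed.

Lemma hmul1g g : hmul hone g = g.
Proof.
case: g => [[x y] t] /=; rewrite !add0r big1 ?addr0 // => j _.
by rewrite mxE mul0r.
Qed.

Lemma hmulg1 g : hmul g hone = g.
Proof.
case: g => [[x y] t] /=; rewrite !addr0 big1 ?addr0 // => j _.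
by rewrite mxE mulr0.
Qed.

Lemma hmulVg g : hmul (hinv g) g = hone.
Proof.
case: g => [[x y] t] /=; rewrite /hone !addNr.
congr (_, _, _).
have -> : \sum_(j < n) (- x) 0 j * y 0 j = - \sum_(j < n) x 0 j * y 0 j.
  by rewrite -sumrN; apply: eq_bigr => j _; rewrite mxE mulNr.
ring.
Qed.

Lemma hmulgV g : hmul g (hinv g) = hone.
Proof.
case: g => [[x y] t] /=; rewrite /hone !subrr.
congr (_, _, _).
have -> : \sum_(j < n) x 0 j * (- y) 0 j = - \sum_(j < n) x 0 j * y 0 j.
  by rewrite -sumrN; apply: eq_bigr => j _; rewrite mxE mulrN.
ring.
Qed.

Lemma hinv_uniq g k : hmul k g = hone -> k = hinv g.
Proof.
move=> H; rewrite -[k]hmulg1 -(hmulgV g) hmulA H hmul1g //.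
Qed.

Lemma hinvK g : hinv (hinv g) = g.
Proof. by symmetry; apply: hinv_uniq; rewrite hmulgV. Qed.

Lemma hinvM g h : hinv (hmul g h) = hmul (hinv h) (hinv g).
Proof.
symmetry; apply: hinv_uniq.
by rewrite hmulA -(hmulA (hinv h)) hmulVg hmulg1 hmulVg.
Qed.

End Group.
Arguments hmulA {K n}. Arguments hmul1g {K n}. Arguments hmulg1 {K n}. Arguments hmulVg {K n}. Arguments hmulgV {K n}. Arguments hinv_uniq {K n}. Arguments hinvK {K n}. Arguments hinvM {K n}. Arguments hone {K n}.

Section Abs.
Variables (R : realType) (K : fieldType) (abs : K -> R).
Hypothesis abs_ge0 : forall x, 0 <= abs x.
Hypothesis abs_eq0 : forall x, abs x = 0 <-> x = 0.
Hypothesis absM : forall x y, abs (x * y) = abs x * abs y.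
Hypothesis absD : forall x y, abs (x + y) <= Num.max (abs x) (abs y).

Lemma abs0 : abs 0 = 0. Proof. by apply/abs_eq0. Qed.

Lemma abs1 : abs 1 = 1.
Proof.
have h : abs 1 * abs 1 = abs 1 by rewrite -absM mulr1.
have nz : abs 1 != 0 by apply/eqP => /abs_eq0 /eqP; rewrite oner_eq0.
by apply: (mulIf nz); rewrite h mul1r.
Qed.

Lemma absN x : abs (- x) = abs x.
Proof.
have h : abs (-1) * abs (-1) = 1 by rewrite -absM mulrNN mulr1 abs1.
have h1 : abs (-1) = 1.
  have := abs_ge0 (-1); move: h; set a := abs (-1) => h ha.
  have : (a - 1) * (a + 1) = 0 by rewrite mulrDr mulrDl h; ring.
  move/eqP; rewrite mulf_eq0 => /orP [|]; first by rewrite subr_eq0 => /eqP.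
  rewrite addr_eq0 => /eqP ha'; move: ha; rewrite ha'; lra.
by rewrite -mulN1r absM h1 mul1r.
Qed.

Lemma absB x y : abs (x - y) <= Num.max (abs x) (abs y).
Proof. by rewrite -(absN y); apply: absD. Qed.

Lemma absBC x y : abs (x - y) = abs (y - x).
Proof. by rewrite -absN opprB. Qed.

Lemma abs_sum_le (I : Type) (r : seq I) (F : I -> K) (b : R) :
  0 <= b -> (forall i, abs (F i) <= b) -> abs (\sum_(i <- r) F i) <= b.
Proof.
move=> b0 H; elim/big_ind: _ => //; first by rewrite abs0.
by move=> u v hu hv; apply: (le_trans (absD u v)); rewrite ge_max hu hv.
Qed.

Lemma abs_sum_lt (I : Type) (r : seq I) (F : I -> K) (b : R) :
  0 < b -> (forall i, abs (F i) < b) -> abs (\sum_(i <- r) F i) < b.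
Proof.
move=> b0 H; elim/big_ind: _ => //; first by rewrite abs0.
by move=> u v hu hv; apply: (le_lt_trans (absD u v)); rewrite gt_max hu hv.
Qed.

Lemma bigmax_le_b (I : Type) (r : seq I) (F : I -> R) (b : R) :
  0 <= b -> (forall i, F i <= b) -> \big[Num.max/0]_(i <- r) F i <= b.
Proof. move=> b0 H; elim/big_ind: _ => // u v hu hv; by rewrite ge_max hu hv. Qed.

Lemma bigmax_lt_b (I : Type) (r : seq I) (F : I -> R) (b : R) :
  0 < b -> (forall i, F i < b) -> \big[Num.max/0]_(i <- r) F i < b.
Proof. move=> b0 H; elim/big_ind: _ => // u v hu hv; by rewrite gt_max hu hv. Qed.

Lemma le_bigmax_seq' (I : eqType) (r : seq I) (F : I -> R) j :
  j \in r -> F j <= \big[Num.max/0]_(i <- r) F i.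
Proof.
elim: r => // a r IH; rewrite inE big_cons => /orP [/eqP ->|/IH h].
  by rewrite le_max lexx.
by rewrite le_max h orbT.
Qed.

Lemma le_bigmax' {m : nat} (F : 'I_m -> R) j : F j <= \big[Num.max/0]_(i < m) F i.
Proof. by apply: le_bigmax_seq'; rewrite mem_index_enum. Qed.

Lemma bigmax_ge0 (m : nat) (F : 'I_m -> R) : (forall i, 0 <= F i) ->
   0 <= \big[Num.max/0]_(i < m) F i.
Proof. move=> H; elim/big_ind: _ => // u v hu hv; by rewrite le_max hu. Qed.

Lemma bigmax_scale (m : nat) (F : 'I_m -> R) c : 0 <= c ->
  \big[Num.max/0]_(i < m) (c * F i) = c * \big[Num.max/0]_(i < m) F i.
Proof.
move=> c0; elim/big_ind2: _ => //; first by rewrite mulr0.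
by move=> a b a' b' -> ->; rewrite maxr_pMr.
Qed.

Variable n : nat.
Notation N := (@hnorm R K abs n).

Lemma hnorm_ge0 g : 0 <= N g.
Proof. case: g => [[x y] t] /=; by rewrite le_max sqrtr_ge0 orbT. Qed.

Lemma hnorm_x (g : heis K n) j : abs (g.1.1 0 j) <= N g.
Proof.
case: g => [[x y] t] /=; rewrite le_max; apply/orP; left.
apply: le_trans; last exact: (le_bigmax' (fun j => Num.max (abs (x 0 j)) (abs (y 0 j))) j).
by rewrite le_max lexx.
Qed.

Lemma hnorm_y (g : heis K n) j : abs (g.1.2 0 j) <= N g.
Proof.
case: g => [[x y] t] /=; rewrite le_max; apply/orP; left.
apply: le_trans; last exact: (le_bigmax' (fun j => Num.max (abs (x 0 j)) (abs (y 0 j))) j).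
by rewrite le_max lexx orbT.
Qed.

Lemma hnorm_t (g : heis K n) : abs g.2 <= N g ^+ 2.
Proof.
case: g => [[x y] t] /=.
have hs : Num.sqrt (abs t) <= Num.max (\big[Num.max/0]_(j < n) Num.max (abs (x 0 j)) (abs (y 0 j))) (Num.sqrt (abs t)).
  by rewrite le_max lexx orbT.
by rewrite -{1}(sqr_sqrtr (abs_ge0 t)) !expr2 ler_pM // sqrtr_ge0.
Qed.

Lemma hnorm_le (x y : 'rV[K]_n) t b : 0 <= b ->
  (forall j, abs (x 0 j) <= b /\ abs (y 0 j) <= b) -> abs t <= b ^+ 2 ->
  N (x, y, t) <= b.
Proof.
move=> b0 H Ht /=; rewrite ge_max; apply/andP; split.
  apply: bigmax_le_b => // j; by rewrite ge_max (proj1 (H j)) (proj2 (H j)).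
have E : b = Num.sqrt (b ^+ 2) by rewrite sqrtr_sqr ger0_norm.
by rewrite [X in _ <= X]E ler_sqrt ?exprn_ge0.
Qed.

Lemma hnorm_lt (x y : 'rV[K]_n) t b : 0 < b ->
  (forall j, abs (x 0 j) < b /\ abs (y 0 j) < b) -> abs t < b ^+ 2 ->
  N (x, y, t) < b.
Proof.
move=> b0 H Ht /=; rewrite gt_max; apply/andP; split.
  apply: bigmax_lt_b => // j; by rewrite gt_max (proj1 (H j)) (proj2 (H j)).
have E : b = Num.sqrt (b ^+ 2) by rewrite sqrtr_sqr gtr0_norm.
by rewrite [X in _ < X]E ltr_sqrt ?exprn_gt0.
Qed.

Lemma hnorm_lt_inv (g : heis K n) b : N g < b ->
  (forall j, abs (g.1.1 0 j) < b /\ abs (g.1.2 0 j) < b) /\ abs g.2 < b ^+ 2.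
Proof.
move=> H; split; first by move=> j; split; apply: le_lt_trans H;
  [apply: hnorm_x | apply: hnorm_y].
apply: (le_lt_trans (hnorm_t g)).
by rewrite ltrXn2r ?nnegrE ?hnorm_ge0 // (le_trans (hnorm_ge0 g)) ?ltW.
Qed.

Lemma hnorm_eq0 (g : heis K n) : N g = 0 <-> g = hone.
Proof.
split; last first.
  move=> ->; apply/eqP; rewrite eq_le hnorm_ge0 andbT; apply: hnorm_le => //.
    by move=> j; rewrite !mxE abs0.
  by rewrite abs0 expr0n.
move=> H; case: g H => [[x y] t] H.
have hx j : x 0 j = 0 by apply/abs_eq0/eqP; rewrite eq_le abs_ge0 andbT -H (hnorm_x (x,y,t)).
have hy j : y 0 j = 0 by apply/abs_eq0/eqP; rewrite eq_le abs_ge0 andbT -H (hnorm_y (x,y,t)).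
have ht : t = 0.
  apply/abs_eq0/eqP; rewrite eq_le abs_ge0 andbT.
  by have := hnorm_t (x,y,t); rewrite H expr0n.
rewrite /hone ht; congr (_, _, _); apply/rowP => j; by rewrite mxE ?hx ?hy.
Qed.


Notation hmul := (@hmul K n).
Notation hinv := (@hinv K n).


Lemma ler3 {x y z : R} : x <= y -> y <= z -> x <= z.
Proof. exact: le_trans. Qed.

Lemma absD_le x y b : abs x <= b -> abs y <= b -> abs (x + y) <= b.
Proof. by move=> hx hy; apply: le_trans (absD x y) _; rewrite ge_max hx hy. Qed.

Lemma sq_le (a m : R) : 0 <= a -> a <= m -> a ^+ 2 <= m ^+ 2.
Proof. by move=> a0 am; rewrite !expr2 ler_pM. Qed.

Lemma hnorm_mul g h : N (hmul g h) <= Num.max (N g) (N h).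
Proof.
suff HH : forall m, 0 <= m -> N g <= m -> N h <= m -> N (hmul g h) <= m.
  by apply: HH; rewrite ?le_max ?hnorm_ge0 ?lexx ?orbT.
move=> m m0 gm hm.
have Hg := hnorm_x g; have Hg' := hnorm_y g.
have Hh := hnorm_x h; have Hh' := hnorm_y h.
have Tg := hnorm_t g; have Th := hnorm_t h.
move: Hg Hg' Hh Hh' Tg Th.
case: g gm => [[x y] t]; case: h hm => [[x' y'] t'] /= hm gm Hg Hg' Hh Hh' Tg Th.
apply: hnorm_le => //.
  move=> j; rewrite !mxE; split.
    by apply: absD_le; [apply: ler3 (Hg j) _ | apply: ler3 (Hh j) _].
  by apply: absD_le; [apply: ler3 (Hg' j) _ | apply: ler3 (Hh' j) _].
have m2 : 0 <= m ^+ 2 by rewrite exprn_ge0.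
apply: absD_le; first apply: absD_le.
    exact: (ler3 Tg (sq_le _ _ (hnorm_ge0 (x,y,t)) gm)).
  exact: (ler3 Th (sq_le _ _ (hnorm_ge0 (x',y',t')) hm)).
apply: abs_sum_le => // j; rewrite absM expr2 ler_pM //.
  by apply: ler3 (Hg j) _.
by apply: ler3 (Hh' j) _.
Qed.

Lemma hnorm_inv_le g : N (hinv g) <= N g.
Proof.
have Hg := hnorm_x g; have Hg' := hnorm_y g.
have Tg := hnorm_t g.
move: Hg Hg' Tg; case: g => [[x y] t] /= Hg Hg' Tg.
apply: hnorm_le => //; first exact: (hnorm_ge0 (x,y,t)).
  by move=> j; rewrite !mxE !absN.
apply: absD_le; first by rewrite absN.
apply: abs_sum_le => [|j]; first exact: (exprn_ge0 2 (hnorm_ge0 (x,y,t))).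
by rewrite absM expr2 ler_pM.
Qed.

Lemma hnorm_inv g : N (hinv g) = N g.
Proof.
apply/eqP; rewrite eq_le hnorm_inv_le /=.
by rewrite -{1}(hinvK g) hnorm_inv_le.
Qed.

Lemma hnorm_dil r g : N (hdil r g) = abs r * N g.
Proof.
case: g => [[x y] t] /=.
have r0 := abs_ge0 r.
rewrite maxr_pMr // -bigmax_scale //; congr (Num.max _ _).
  by apply: eq_bigr => j _; rewrite !mxE !absM maxr_pMr.
rewrite absM expr2 absM sqrtrM ?mulr_ge0 // -expr2 sqrtr_sqr ger0_norm //.
Qed.


Lemma ultra_of (d : heis K n -> heis K n -> R) :
  (forall x y, 0 <= d x y) -> (forall x y, d x y = 0 <-> x = y) ->
  (forall x y, d x y = d y x) ->
  (forall x y z, d x z <= Num.max (d x y) (d y z)) -> is_ultrametric d.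
Proof.
move=> h0 h1 h2 h3; split => // x y z; apply: le_trans (h3 x y z) _.
have := h0 x y; have := h0 y z; set a := d x y; set b := d y z => hb ha.
by rewrite ge_max lerDl hb lerDr ha.
Qed.

Lemma dL_ultra : is_ultrametric (fun g h => N (hmul (hinv h) g)).
Proof.
apply: ultra_of => [x y|x y|x y|x y z].
- exact: hnorm_ge0.
- rewrite hnorm_eq0; split => [E|->]; last exact: hmulVg.
  by rewrite -(hmul1g x) -(hmulgV y) -hmulA E hmulg1.
- by rewrite -hnorm_inv hinvM hinvK.
- rewrite maxC; apply: le_trans (hnorm_mul _ _).
  by rewrite -hmulA (hmulA y) hmulgV hmul1g.
Qed.

Lemma dR_ultra : is_ultrametric (fun g h => N (hmul g (hinv h))).
Proof.
apply: ultra_of => [x y|x y|x y|x y z].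
- exact: hnorm_ge0.
- rewrite hnorm_eq0; split => [E|->]; last exact: hmulgV.
  by rewrite -(hmulg1 x) -(hmulVg y) hmulA E hmul1g.
- by rewrite -hnorm_inv hinvM hinvK.
- apply: le_trans (hnorm_mul _ _).
  by rewrite -hmulA (hmulA (hinv y)) hmulVg hmul1g.
Qed.

Lemma dL_inv : left_invariant (fun g h => N (hmul (hinv h) g)).
Proof.
move=> a g h /=; by rewrite hinvM -hmulA (hmulA (hinv a)) hmulVg hmul1g.
Qed.

Lemma dR_inv : right_invariant (fun g h => N (hmul g (hinv h))).
Proof.
move=> b g h /=; by rewrite hinvM -hmulA (hmulA b) hmulgV hmul1g.
Qed.

Definition close (d : R) (g h : heis K n) :=
  (forall j, abs (h.1.1 0 j - g.1.1 0 j) < d /\ abs (h.1.2 0 j - g.1.2 0 j) < d)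
  /\ abs (h.2 - g.2) < d.

Lemma finite_common (P : 'I_n -> R -> Prop) :
  (forall j e e', P j e -> 0 < e' -> e' <= e -> P j e') ->
  (forall j, exists e, 0 < e /\ P j e) -> exists e, 0 < e /\ forall j, P j e.
Proof.
move=> Pm Pe.
have HS : forall s : seq 'I_n, exists e, 0 < e /\ forall j, j \in s -> P j e.
  2: { have [e [e0 He]] := HS (enum 'I_n).
       by exists e; split => // j; apply: He; rewrite mem_enum. }
elim=> [|a s [e2 [e20 H2]]]; first by exists 1; split.
have [e1 [e10 H1]] := Pe a.
exists (Num.min e1 e2); split; first by rewrite lt_min e10 e20.
move=> j; rewrite inE => /orP [/eqP ->|js].
  by apply: Pm H1 _ _; rewrite ?lt_min ?e10 ?e20 // ge_min lexx.
by apply: Pm (H2 j js) _ _; rewrite ?lt_min ?e10 ?e20 // ge_min lexx orbT.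
Qed.

Lemma ball_open (c : K) (d : R) : abs_open abs (fun a => abs (a - c) < d).
Proof.
move=> a Ha; exists d; split; first exact: le_lt_trans (abs_ge0 _) Ha.
move=> b Hb; have -> : b - c = (b - a) + (a - c) by ring.
by apply: le_lt_trans (absD _ _) _; rewrite gt_max Hb Ha.
Qed.

Lemma topo (d : heis K n -> heis K n -> R) :
  (forall g e, 0 < e -> exists de, 0 < de /\ forall h, close de g h -> d g h < e) ->
  (forall g de, 0 < de -> exists e, 0 < e /\ forall h, d g h < e -> close de g h) ->
  induces_product_topology abs d.
Proof.
move=> A B U; split.
  move=> HU g Ug; have [e [e0 He]] := HU g Ug; have [de [de0 Hde]] := A g e e0.
  exists (fun j a => abs (a - g.1.1 0 j) < de), (fun j a => abs (a - g.1.2 0 j) < de),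
    (fun a => abs (a - g.2) < de); split.
  - by move=> j; apply: ball_open.
  - by move=> j; apply: ball_open.
  - exact: ball_open.
  - by split; [move=> j; rewrite !subrr abs0 | rewrite subrr abs0].
  - by move=> h Hxy Ht; apply: He; apply: Hde; split.
move=> HU g Ug; have [Vx [Vy [Vt [Ox Oy Ot [Gin Gt] Hbox]]]] := HU g Ug.
have [et [et0 Ht]] := Ot _ Gt.
pose P := fun j de => (forall y, abs (y - g.1.1 0 j) < de -> Vx j y) /\
                    (forall y, abs (y - g.1.2 0 j) < de -> Vy j y).
have Pm : forall j e e', P j e -> 0 < e' -> e' <= e -> P j e'.
  move=> j e e' [H1 H2] _ le; split => y hy; [apply: H1 | apply: H2];
    exact: lt_le_trans hy le.
have Pe : forall j, exists e, 0 < e /\ P j e.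
  move=> j; have [Gx Gy] := Gin j.
  have [e1 [e10 H1]] := Ox j _ Gx; have [e2 [e20 H2]] := Oy j _ Gy.
  exists (Num.min e1 e2); split; first by rewrite lt_min e10 e20.
  split=> y hy; [apply: H1 | apply: H2]; apply: lt_le_trans hy _;
    by rewrite ge_min lexx ?orbT.
have [ex [ex0 Hx]] := finite_common P Pm Pe.
have de0 : 0 < Num.min ex et by rewrite lt_min ex0 et0.
have [e [e0 He]] := B g _ de0.
exists e; split => // h Hd; have [Hc Ht'] := He h Hd.
apply: Hbox.
  move=> j; have [c1 c2] := Hc j; split; [apply: (proj1 (Hx j)) | apply: (proj2 (Hx j))].
    by apply: lt_le_trans c1 _; rewrite ge_min lexx.
  by apply: lt_le_trans c2 _; rewrite ge_min lexx.
by apply: Ht; apply: lt_le_trans Ht' _; rewrite ge_min lexx orbT.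
Qed.

Lemma absD_lt x y b : abs x < b -> abs y < b -> abs (x + y) < b.
Proof. by move=> hx hy; apply: le_lt_trans (absD x y) _; rewrite gt_max hx hy. Qed.

Lemma abs_prod_lt (a b : 'I_n -> K) C eta : 0 < C -> 0 < eta ->
  (forall j, abs (a j) <= C /\ abs (b j) < eta) ->
  abs (\sum_(j < n) a j * b j) < C * eta.
Proof.
move=> C0 e0 H; apply: abs_sum_lt; first by rewrite mulr_gt0.
move=> j; have [h1 h2] := H j; rewrite absM.
apply: le_lt_trans (ler_wpM2r (abs_ge0 _) h1) _.
by rewrite ltr_pM2l.
Qed.

Lemma near_bound (u v : K) M : 0 <= M -> abs (u - v) <= 1 -> abs v <= M ->
  abs u <= M + 1.
Proof.
move=> M0 h1 h2; have -> : u = (u - v) + v by rewrite subrK.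
apply: absD_le; first by apply: le_trans h1 _; rewrite lerDr.
by apply: le_trans h2 _; rewrite lerDl.
Qed.

Definition ABprop (g : heis K n) (F : heis K n -> heis K n) :=
  (forall e, 0 < e -> exists de, 0 < de /\ forall h, close de g h -> N (F h) < e) /\
  (forall de, 0 < de -> exists e, 0 < e /\ forall h, N (F h) < e -> close de g h).

Lemma AB (g : heis K n) (F : heis K n -> heis K n) (a b : heis K n -> 'I_n -> K) :
  (forall (h : heis K n) (j : 'I_n), abs ((F h).1.1 0 j) = abs (h.1.1 0 j - g.1.1 0 j) /\
               abs ((F h).1.2 0 j) = abs (h.1.2 0 j - g.1.2 0 j)) ->
  (forall h : heis K n, (F h).2 = - (h.2 - g.2) + \sum_(j < n) a h j * b h j) ->
  (forall (h : heis K n) (eta : R), eta <= 1 ->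
     (forall j, abs (h.1.1 0 j - g.1.1 0 j) < eta /\ abs (h.1.2 0 j - g.1.2 0 j) < eta) ->
     forall j, abs (a h j) <= N g + 1 /\ abs (b h j) < eta) ->
  ABprop g F.
Proof.
move=> H1 H2 H3.
have C1 : 1 <= N g + 1 by rewrite lerDr hnorm_ge0.
move: (N g + 1) C1 H3 => C C1 H3.
have C0 : 0 < C by apply: lt_le_trans C1; rewrite ltr01.
have trip : forall k : heis K n, k = (k.1.1, k.1.2, k.2) by case=> [[? ?] ?].
split.
  move=> e e0.
  have e20 : 0 < e ^+ 2 by rewrite exprn_gt0.
  have hk : e ^+ 2 / (2 * C) * (2 * C) = e ^+ 2.
    by rewrite divfK // mulf_neq0 ?gt_eqF // ltr0n.
  have k0 : 0 < e ^+ 2 / (2 * C) by rewrite divr_gt0 // mulr_gt0 // ltr0n.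
  move: (e ^+ 2 / (2 * C)) hk k0 => k hk k0.
  exists (Num.min (Num.min 1 e) k).
  have de0 : 0 < Num.min (Num.min 1 e) k by rewrite !lt_min ltr01 e0 k0.
  have de1 : Num.min (Num.min 1 e) k <= 1 by rewrite !ge_min lexx.
  have dee : Num.min (Num.min 1 e) k <= e by rewrite !ge_min lexx orbT.
  have dek : Num.min (Num.min 1 e) k <= k by rewrite ge_min lexx orbT.
  move: (Num.min (Num.min 1 e) k) de0 de1 dee dek => de de0 de1 dee dek.
  split => // h [Hc Ht].
  rewrite (trip (F h)); apply: hnorm_lt => //.
    move=> j; have [a1 a2] := H1 h j; have [c1 c2] := Hc j; rewrite a1 a2.
    by split; apply: lt_le_trans dee.
  rewrite H2; move: (e ^+ 2) e20 hk => e2 e20 hk; apply: absD_lt.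
    rewrite absN; apply: lt_le_trans Ht _; nra.
  have hp := abs_prod_lt (a h) (b h) C de C0 de0 (H3 h de de1 Hc).
  apply: lt_le_trans hp _; nra.
move=> de de0.
have hkk : de / (2 * C) * (2 * C) = de.
  by rewrite divfK // mulf_neq0 ?gt_eqF // ltr0n.
have kk0 : 0 < de / (2 * C) by rewrite divr_gt0 // mulr_gt0 // ltr0n.
move: (de / (2 * C)) hkk kk0 => kk hkk kk0.
exists (Num.min 1 kk).
have e0 : 0 < Num.min 1 kk by rewrite !lt_min ltr01 kk0.
have e1 : Num.min 1 kk <= 1 by rewrite !ge_min lexx.
have ek : Num.min 1 kk <= kk by rewrite ge_min lexx orbT.
move: (Num.min 1 kk) e0 e1 ek => e e0 e1 ek.
split => // h Hh; have [Hc Ht] := hnorm_lt_inv (F h) e Hh.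
have Hc' : forall j, abs (h.1.1 0 j - g.1.1 0 j) < e /\ abs (h.1.2 0 j - g.1.2 0 j) < e.
  by move=> j; rewrite -(proj1 (H1 h j)) -(proj2 (H1 h j)); exact: Hc j.
have ltd : e < de by nra.
split.
  by move=> j; have [c1 c2] := Hc' j; split; apply: lt_trans ltd.
have E : h.2 - g.2 = \sum_(j < n) a h j * b h j - (F h).2 by rewrite H2; ring.
rewrite E; apply: absD_lt; last rewrite absN.
  have hp := abs_prod_lt (a h) (b h) C e C0 e0 (H3 h e e1 Hc').
  apply: lt_le_trans hp _; nra.
apply: lt_le_trans Ht _; rewrite expr2; nra.
Qed.

Lemma topo_of (F : heis K n -> heis K n -> heis K n) :
  (forall g, ABprop g (F g)) -> induces_product_topology abs (fun g h => N (F g h)).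
Proof.
move=> H; apply: topo.
  by move=> g e e0; exact: (proj1 (H g) e e0).
by move=> g de de0; exact: (proj2 (H g) de de0).
Qed.

Lemma dL_topo : induces_product_topology abs (fun g h => N (hmul (hinv h) g)).
Proof.
apply: (topo_of (fun g h => hmul (hinv h) g)) => g.
apply: (AB _ _ (fun h j => h.1.1 0 j) (fun h j => h.1.2 0 j - g.1.2 0 j)).
- move=> h j; case: h => [[x' y'] t']; case: g => [[x y] t] /=.
  by rewrite !mxE; split; rewrite addrC absBC.
- move=> h; case: h => [[x' y'] t']; case: g => [[x y] t] /=.
  have E : \sum_(j < n) x' 0 j * (y' 0 j - y 0 j)
        = \sum_(j < n) x' 0 j * y' 0 j + \sum_(j < n) (- x') 0 j * y 0 j.
    by rewrite -big_split; apply: eq_bigr => j _; rewrite !mxE /=; ring.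
  rewrite E; ring.
- move=> h eta eta1 Hc j; have [c1 c2] := Hc j; split => //.
  exact: near_bound (hnorm_ge0 g) (ltW (lt_le_trans c1 eta1)) (hnorm_x g j).
Qed.

Lemma dR_topo : induces_product_topology abs (fun g h => N (hmul g (hinv h))).
Proof.
apply: (topo_of (fun g h => hmul g (hinv h))) => g.
apply: (AB _ _ (fun h j => h.1.2 0 j) (fun h j => h.1.1 0 j - g.1.1 0 j)).
- move=> h j; case: h => [[x' y'] t']; case: g => [[x y] t] /=.
  by rewrite !mxE; split; rewrite absBC.
- move=> h; case: h => [[x' y'] t']; case: g => [[x y] t] /=.
  have E : \sum_(j < n) y' 0 j * (x' 0 j - x 0 j)
        = \sum_(j < n) x' 0 j * y' 0 j + \sum_(j < n) x 0 j * (- y') 0 j.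
    by rewrite -big_split; apply: eq_bigr => j _; rewrite !mxE /=; ring.
  rewrite E; ring.
- move=> h eta eta1 Hc j; have [c1 c2] := Hc j; split => //.
  exact: near_bound (hnorm_ge0 g) (ltW (lt_le_trans c2 eta1)) (hnorm_y g j).
Qed.

Lemma main_aux :
  [/\ (forall g h : heis K n,
         hnorm abs (hmul g h) <= Num.max (hnorm abs g) (hnorm abs h)),
      (forall g : heis K n, hnorm abs (hinv g) = hnorm abs g),
      (forall (r : K) (g : heis K n), hnorm abs (hdil r g) = abs r * hnorm abs g),
      (let dL := fun g h : heis K n => hnorm abs (hmul (hinv h) g) in
       [/\ is_ultrametric dL, left_invariant dL & induces_product_topology abs dL])
    & (let dR := fun g h : heis K n => hnorm abs (hmul g (hinv h)) in
       [/\ is_ultrametric dR, right_invariant dR & induces_product_topology abs dR])].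
Proof.
split.
- exact: hnorm_mul.
- exact: hnorm_inv.
- exact: hnorm_dil.
- by split; [exact: dL_ultra | exact: dL_inv | exact: dL_topo].
- by split; [exact: dR_ultra | exact: dR_inv | exact: dR_topo].
Qed.

End Abs.

Theorem mainTheorem1 (p : nat) (R : realType) (K : fieldType) (abs : K -> R)
    (n : nat) :
  prime p -> is_Qp p abs -> (0 < n)%N ->
  [/\ (forall g h : heis K n,
         hnorm abs (hmul g h) <= Num.max (hnorm abs g) (hnorm abs h)),
      (forall g : heis K n, hnorm abs (hinv g) = hnorm abs g),
      (forall (r : K) (g : heis K n), hnorm abs (hdil r g) = abs r * hnorm abs g),
      (let dL := fun g h : heis K n => hnorm abs (hmul (hinv h) g) in
       [/\ is_ultrametric dL, left_invariant dL & induces_product_topology abs dL])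
    & (let dR := fun g h : heis K n => hnorm abs (hmul g (hinv h)) in
       [/\ is_ultrametric dR, right_invariant dR & induces_product_topology abs dR])].
Proof.
move=> _ [h0 [h1 [h2 [h3 _]]]] _.
exact: (@main_aux R K abs h0 h1 h2 h3 n).
Qed.
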